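(* Let $(G,\cdot)$ be a group of nilpotence class (at most) two. For $n\in\mathbb{Z}$ define $g\circ_n h=g\cdot g^{n}\cdot h\cdot g^{-n}$, which equals $g\cdot h\cdot[g,h]^{n}$. Then $(\circ_n: n\in\mathbb{Z})$ is a brace block on $G$.
   Context: Commutator convention: $[x,y]=x y x^{-1}y^{-1}$ (so that $g^n h g^{-n}=h[h^{-1},g^n]$). A skew brace is a triple $(G,\cdot,\circ)$ where $(G,\cdot)$ and $(G,\circ)$ are groups and $g\circ(h\cdot k)=(g\circ h)\cdot g^{-1}\cdot(g\circ k)$ for all $g,h,k$. A bi-skew brace is a triple $(G,\cdot,\circ)$ such that both $(G,\cdot,\circ)$ and $(G,\circ,\cdot)$ are skew braces. A brace block on a set $G$ is a family $\mathcal{F}$ of group operations on $G$ such that $(G,\circ,\diamond)$ is a bi-skew brace for all $\circ,\diamond\in\mathcal{F}$. *)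

(* Defs.v *)
From Stdlib Require Import ZArith.

Definition is_group {T : Type} (mul : T -> T -> T) (one : T) (inv : T -> T) : Prop :=
  (forall x y z, mul x (mul y z) = mul (mul x y) z) /\
  (forall x, mul one x = x /\ mul x one = x) /\
  (forall x, mul x (inv x) = one /\ mul (inv x) x = one).

Definition commutator {T : Type} (mul : T -> T -> T) (inv : T -> T) (x y : T) : T :=
  mul (mul (mul x y) (inv x)) (inv y).

Definition nil_class_le2 {T : Type} (mul : T -> T -> T) (inv : T -> T) : Prop :=
  forall x y z, mul (commutator mul inv x y) z = mul z (commutator mul inv x y).

Definition zpow {T : Type} (mul : T -> T -> T) (one : T) (inv : T -> T) (g : T) (n : Z) : T :=
  match n with
  | Z0 => one
  | Zpos p => Nat.iter (Pos.to_nat p) (mul g) one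
  | Zneg p => inv (Nat.iter (Pos.to_nat p) (mul g) one)
  end.

Definition circ_n {T : Type} (mul : T -> T -> T) (one : T) (inv : T -> T) (n : Z) (g h : T) : T :=
  mul g (mul (mul (zpow mul one inv g n) h) (zpow mul one inv g (- n))).

Definition is_identity {T : Type} (op : T -> T -> T) (e : T) : Prop :=
  forall x, op e x = x /\ op x e = x.

Definition is_group_op {T : Type} (op : T -> T -> T) : Prop :=
  (forall x y z, op x (op y z) = op (op x y) z) /\
  exists e, is_identity op e /\ forall x, exists y, op x y = e /\ op y x = e.

Definition is_inverse {T : Type} (op : T -> T -> T) (g gi : T) : Prop :=
  exists e, is_identity op e /\ op g gi = e /\ op gi g = e.

Definition skew_brace {T : Type} (dot circ : T -> T -> T) : Prop :=
  is_group_op dot /\ is_group_op circ /\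
  forall g h k gi, is_inverse dot g gi ->
    circ g (dot h k) = dot (dot (circ g h) gi) (circ g k).

Definition bi_skew_brace {T : Type} (dot circ : T -> T -> T) : Prop :=
  skew_brace dot circ /\ skew_brace circ dot.

Definition brace_block {T I : Type} (F : I -> T -> T -> T) : Prop :=
  (forall i, is_group_op (F i)) /\
  forall i j, bi_skew_brace (F i) (F j).

(* Main.v *)
Require Import Defs.
From Stdlib Require Import ZArith FunctionalExtensionality.

Section S.
Variable T : Type.
Variable mul : T -> T -> T.
Variable one : T.
Variable inv : T -> T.
Hypothesis HG : is_group mul one inv.
Hypothesis Hc : nil_class_le2 mul inv.

Local Notation "x ** y" := (mul x y) (at level 40, left associativity).
Local Notation comm x y := (commutator mul inv x y).
Local Notation npow a k := (Nat.iter k (mul a) one).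
Local Notation pw a n := (zpow mul one inv a n).

Lemma assoc x y z : x ** (y ** z) = x ** y ** z.
Proof. apply (proj1 HG). Qed.
Lemma lid x : one ** x = x. Proof. apply (proj1 (proj2 HG)). Qed.
Lemma rid x : x ** one = x. Proof. apply (proj1 (proj2 HG)). Qed.
Lemma rinv x : x ** inv x = one. Proof. apply (proj2 (proj2 HG)). Qed.
Lemma linv x : inv x ** x = one. Proof. apply (proj2 (proj2 HG)). Qed.
Lemma rK u x : u ** x ** inv x = u.
Proof. rewrite <- assoc, rinv, rid; reflexivity. Qed.
Lemma rKV u x : u ** inv x ** x = u.
Proof. rewrite <- assoc, linv, rid; reflexivity. Qed.
Lemma uniq_inv x y : x ** y = one -> y = inv x.
Proof. intros H. rewrite <- (lid y), <- (linv x), <- assoc, H, rid. reflexivity. Qed.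
Lemma inv_mul x y : inv (x ** y) = inv y ** inv x.
Proof. symmetry; apply uniq_inv. rewrite assoc, <- (assoc x y), rinv, rid, rinv. reflexivity. Qed.
Lemma inv_inv x : inv (inv x) = x.
Proof. symmetry; apply uniq_inv; apply linv. Qed.
Lemma inv_one : inv one = one.
Proof. symmetry; apply uniq_inv; apply lid. Qed.

Ltac gs := repeat (rewrite ?assoc, ?rK, ?rKV, ?rinv, ?linv, ?lid, ?rid, ?inv_mul, ?inv_inv, ?inv_one).

Definition cen a := forall z, a ** z = z ** a.
Lemma cen_comm x y : cen (comm x y). Proof. intro z; apply Hc. Qed.
Lemma cen_one : cen one. Proof. intro z; rewrite lid, rid; reflexivity. Qed.
Lemma cen_mul a b : cen a -> cen b -> cen (a ** b).
Proof. intros Ha Hb z. rewrite <- assoc, Hb, assoc, Ha, assoc. reflexivity. Qed.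
Lemma cen_inv a : cen a -> cen (inv a).
Proof. intros Ha z. transitivity (inv (inv z ** a)).
  rewrite inv_mul, inv_inv; reflexivity.
  rewrite <- Ha, inv_mul, inv_inv; reflexivity. Qed.

Lemma conj_comm x y : x ** y ** inv x = comm x y ** y.
Proof. unfold commutator; rewrite rKV; reflexivity. Qed.
Lemma swap x y : x ** y = comm x y ** y ** x.
Proof. unfold commutator; rewrite !rKV; reflexivity. Qed.
Lemma comm_inv x y : comm y x = inv (comm x y).
Proof. apply uniq_inv. unfold commutator. gs. reflexivity. Qed.
Lemma comm_cen_l a z : cen a -> comm a z = one.
Proof. intros H. unfold commutator. rewrite (H z), rK, rinv. reflexivity. Qed.
Lemma comm_cen_r a z : cen a -> comm z a = one.
Proof. intros H. rewrite (comm_inv a z), comm_cen_l, inv_one; auto. Qed.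
Lemma comm_mull x y z : comm (x ** y) z = comm x z ** comm y z.
Proof.
  transitivity (x ** (y ** z ** inv y) ** inv x ** inv z).
  unfold commutator; gs; reflexivity.
  rewrite (conj_comm y z), assoc, <- (Hc y z x).
  rewrite (Hc x z (comm y z)). change (comm x z) with (x ** z ** inv x ** inv z). rewrite !assoc. reflexivity.
Qed.
Lemma comm_mulr x y z : comm x (y ** z) = comm x y ** comm x z.
Proof.
  rewrite (comm_inv (y ** z) x), comm_mull, inv_mul, <- !comm_inv, (Hc x z). reflexivity.
Qed.
Lemma comm_self x : comm x x = one.
Proof. unfold commutator; rewrite rK, rinv; reflexivity. Qed.
Lemma comm_invr x y : comm x (inv y) = inv (comm x y).
Proof. apply uniq_inv. rewrite <- comm_mulr, rinv, comm_cen_r; auto using cen_one. Qed.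
Lemma comm_invl x y : comm (inv x) y = inv (comm x y).
Proof. apply uniq_inv. rewrite <- comm_mull, rinv, comm_cen_l; auto using cen_one. Qed.

Lemma cen_npow a k : cen a -> cen (npow a k).
Proof. intros Ha. induction k; simpl. apply cen_one. apply cen_mul; auto. Qed.
Lemma npow_mul a b k : cen a -> cen b -> npow (a ** b) k = npow a k ** npow b k.
Proof. intros Ha Hb. induction k; simpl. rewrite lid; reflexivity.
  rewrite IHk, !assoc, <- (assoc a b), (Hb (npow a k)), assoc. reflexivity. Qed.
Lemma npow_inv a k : cen a -> npow (inv a) k = inv (npow a k).
Proof. intros Ha. induction k; simpl. rewrite inv_one; reflexivity.
  rewrite IHk, inv_mul. apply (cen_inv a Ha). Qed.
Lemma npow_one k : npow one k = one.
Proof. induction k; simpl. reflexivity. rewrite IHk, lid; reflexivity. Qed.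

Lemma cen_pw a n : cen a -> cen (pw a n).
Proof. intros Ha; destruct n; cbn [zpow]; auto using cen_one, cen_npow, cen_inv. Qed.
Lemma pw_mul a b n : cen a -> cen b -> pw (a ** b) n = pw a n ** pw b n.
Proof. intros Ha Hb; destruct n; cbn [zpow].
  rewrite lid; reflexivity. apply npow_mul; auto.
  rewrite npow_mul, inv_mul; auto. apply cen_inv, cen_npow; auto. Qed.
Lemma pw_inv a n : cen a -> pw (inv a) n = inv (pw a n).
Proof. intros Ha; destruct n; cbn [zpow].
  rewrite inv_one; reflexivity. apply npow_inv; auto. rewrite npow_inv; auto. Qed.
Lemma pw_one n : pw one n = one.
Proof. destruct n; cbn [zpow]; rewrite ?npow_one, ?inv_one; reflexivity. Qed.

Lemma conj_npow g h k : npow g k ** h ** inv (npow g k) = h ** npow (comm g h) k.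
Proof. induction k; simpl.
  rewrite inv_one, lid, !rid; reflexivity.
  rewrite inv_mul, assoc, <- (assoc g _ h), <- (assoc g _ (inv _)), IHk.
  rewrite assoc, <- (assoc (g ** h)), (cen_npow _ k (cen_comm g h) (inv g)), assoc.
  rewrite conj_comm, (Hc g h h), assoc. reflexivity. Qed.
Lemma conj_npow_neg g h k : inv (npow g k) ** h ** npow g k = h ** inv (npow (comm g h) k).
Proof. induction k; simpl.
  rewrite inv_one, lid, !rid; reflexivity.
  assert (E : inv g ** h ** g = h ** inv (comm g h)).
  { pose proof (conj_comm (inv g) h) as E. rewrite inv_inv, comm_invl in E.
    rewrite E. apply (cen_inv _ (cen_comm g h)). }
  rewrite inv_mul, !assoc, <- (assoc (inv (npow g k)) (inv g) h), <- (assoc _ (inv g ** h) g), E.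
  rewrite assoc, <- (assoc _ (inv (comm g h))), (cen_inv _ (cen_comm g h) (npow g k)), assoc, IHk.
  rewrite inv_mul, assoc. reflexivity.
Qed.

Lemma conj_pw g h n : pw g n ** h ** pw g (- n) = h ** pw (comm g h) n.
Proof. destruct n; cbn [zpow Z.opp].
  rewrite lid, !rid; reflexivity.
  apply conj_npow. apply conj_npow_neg. Qed.

Lemma circ_formula n g h : circ_n mul one inv n g h = g ** h ** pw (comm g h) n.
Proof. unfold circ_n. rewrite conj_pw, assoc. reflexivity. Qed.

Definition P n x y := pw (comm x y) n.
Lemma cen_P n x y : cen (P n x y). Proof. apply cen_pw, cen_comm. Qed.
Lemma P_mull n x y z : P n (x ** y) z = P n x z ** P n y z.
Proof. unfold P. rewrite comm_mull, pw_mul; auto using cen_comm. Qed.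
Lemma P_mulr n x y z : P n x (y ** z) = P n x y ** P n x z.
Proof. unfold P. rewrite comm_mulr, pw_mul; auto using cen_comm. Qed.
Lemma P_cenl n a z : cen a -> P n a z = one.
Proof. intros H; unfold P. rewrite comm_cen_l, pw_one; auto. Qed.
Lemma P_cenr n a z : cen a -> P n z a = one.
Proof. intros H; unfold P. rewrite comm_cen_r, pw_one; auto. Qed.
Lemma P_self n x : P n x x = one.
Proof. unfold P. rewrite comm_self, pw_one; auto. Qed.
Lemma P_sym n x y : P n y x = inv (P n x y).
Proof. unfold P. rewrite comm_inv, pw_inv; auto using cen_comm. Qed.
Lemma P_invr n x y : P n x (inv y) = inv (P n x y).
Proof. unfold P. rewrite comm_invr, pw_inv; auto using cen_comm. Qed.
Lemma P_invl n x y : P n (inv x) y = inv (P n x y).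
Proof. unfold P. rewrite comm_invl, pw_inv; auto using cen_comm. Qed.
Lemma P_Pl n k a b z : P n (P k a b) z = one. Proof. apply P_cenl, cen_P. Qed.
Lemma P_Pr n k a b z : P n z (P k a b) = one. Proof. apply P_cenr, cen_P. Qed.
Lemma P_cl n a b z : P n (comm a b) z = one. Proof. apply P_cenl, cen_comm. Qed.
Lemma P_cr n a b z : P n z (comm a b) = one. Proof. apply P_cenr, cen_comm. Qed.

Lemma cr u a v : cen a -> u ** a ** v = u ** v ** a.
Proof. intros H. rewrite <- assoc, H, assoc. reflexivity. Qed.
Lemma cl a v : cen a -> a ** v = v ** a.
Proof. intros H; apply H. Qed.

Ltac is_cen a := lazymatch a with
 | commutator _ _ _ _ => idtac | P _ _ _ => idtac | inv ?b => is_cen b | one => idtac end.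
Ltac noncen v := tryif is_cen v then fail else idtac.
Ltac auto_cen := repeat first [apply cen_inv | apply cen_P | apply cen_comm | apply cen_one | apply cen_mul].
Ltac push := repeat match goal with
 | |- context [?u ** ?a ** ?v] => is_cen a; noncen v; rewrite (cr u a v) by auto_cen
 | |- context [?a ** ?v] => is_cen a; noncen v; rewrite (cl a v) by auto_cen end.
Lemma P_onel n z : P n one z = one. Proof. apply P_cenl, cen_one. Qed.
Lemma P_oner n z : P n z one = one. Proof. apply P_cenr, cen_one. Qed.
Ltac Pkill := rewrite ?P_onel, ?P_oner, ?P_mull, ?P_mulr, ?P_Pl, ?P_Pr, ?P_cl, ?P_cr, ?P_self, ?P_invl, ?P_invr, ?inv_inv, ?inv_one, ?rid, ?lid.

Definition op n x y := x ** y ** P n x y.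

Lemma op_assoc n x y z : op n x (op n y z) = op n (op n x y) z.
Proof. unfold op. Pkill. gs. push.
  rewrite (cr _ (P n y z) (P n x y)), (cr _ (P n y z) (P n x z)) by apply cen_P. reflexivity.
Qed.

Lemma op_lid n x : op n one x = x.
Proof. unfold op. rewrite P_cenl by apply cen_one. rewrite lid, rid; reflexivity. Qed.
Lemma op_rid n x : op n x one = x.
Proof. unfold op. rewrite P_cenr by apply cen_one. rewrite !rid; reflexivity. Qed.
Lemma op_rinv n x : op n x (inv x) = one.
Proof. unfold op. rewrite P_invr, P_self, inv_one, rinv, rid; reflexivity. Qed.
Lemma op_linv n x : op n (inv x) x = one.
Proof. unfold op. rewrite P_invl, P_self, inv_one, linv, rid; reflexivity. Qed.

Lemma op_group n : is_group_op (op n).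
Proof. split. intros; apply op_assoc.
  exists one. split. intro x; split; [apply op_lid | apply op_rid].
  intro x; exists (inv x); split; [apply op_rinv | apply op_linv]. Qed.

Lemma inv_is m g gi : is_inverse (op m) g gi -> gi = inv g.
Proof. intros [e [He [H1 H2]]].
  assert (Ee : e = one). { destruct (He one) as [H3 _]. rewrite op_rid in H3. exact H3. }
  subst e.
  rewrite <- (op_lid m gi), <- (op_linv m g), <- op_assoc, Ee, op_rid. reflexivity. Qed.

Lemma skew m n : skew_brace (op m) (op n).
Proof. split; [apply op_group | split; [apply op_group |]].
  intros g h k gi Hi. rewrite (inv_is _ _ _ Hi). clear gi Hi.
  unfold op. do 3 (Pkill; gs; push).
  rewrite (cr _ (inv (P m h g)) (P n g k)), (cr _ (inv (P m h g)) (P m g k)),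
    (cr _ (inv (P m h g)) (P m h g)), rK by auto_cen.
  rewrite (cr _ (P m g k) (P m h k)), rK by auto_cen.
  rewrite (cr _ (P m h k) (P n g h)), (cr _ (P m h k) (P n g k)) by auto_cen. reflexivity.
Qed.

Lemma brace_op : brace_block op.
Proof. split. apply op_group. intros i j; split; apply skew. Qed.
End S.

Theorem mainTheorem8 (T : Type) (mul : T -> T -> T) (one : T) (inv : T -> T) :
  is_group mul one inv ->
  nil_class_le2 mul inv ->
  (forall (n : Z) (g h : T),
      circ_n mul one inv n g h =
      mul (mul g h) (zpow mul one inv (commutator mul inv g h) n)) /\
  brace_block (fun n : Z => circ_n mul one inv n).
Proof.
  intros HG Hc. split.
  - intros n g h. apply circ_formula; assumption.
  - replace (fun n : Z => circ_n mul one inv n) with (op T mul one inv).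
    + apply brace_op; assumption.
    + extensionality n. extensionality x. extensionality y.
      unfold op, P. symmetry. apply circ_formula; assumption.
Qed.
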